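(* Let $(\mathscr{D},b)$ be a finite bilinear form with $(\mathscr{D},b)\cong(\mathscr{D},-b)$, and let $\sigma\in\{0,4\}$. Then there exists exactly one equivalence class $\{\hat q\}$ of quadratic $\mathsf{T}$-refinements of $b$ such that $\tau_1(\hat q)/|\tau_1(\hat q)|=e^{2\pi i\sigma/8}$, where $\tau_1(\hat q)=\sum_{x\in\mathscr{D}}e^{2\pi i\hat q(x)}$.
   Context: A finite bilinear form $(\mathscr{D},b)$ is a finite abelian group $\mathscr{D}$ with a symmetric, bilinear, non-degenerate map $b:\mathscr{D}\times\mathscr{D}\to\mathbb{Q}/\mathbb{Z}$; $(\mathscr{D},b)\cong(\mathscr{D},-b)$ means there is a group automorphism $f$ of $\mathscr{D}$ with $b(f(x),f(y))=-b(x,y)$. A quadratic refinement of $b$ is a function $\hat q:\mathscr{D}\to\mathbb{Q}/\mathbb{Z}$ with $\hat q(x+y)-\hat q(x)-\hat q(y)+\hat q(0)=b(x,y)$ for all $x,y\in\mathscr{D}$. Two quadratic refinements $\hat q,\hat q'$ on $\mathscr{D}$ are equivalent if there is $\delta\in\mathscr{D}$ with $\hat q(x)=\hat q'(x+\delta)$ for all $x$; the equivalence class is denoted $\{\hat q\}$ (the Gauss sum $\tau_1$ depends only on the class). A quadratic refinement $\hat q$ is a $\mathsf{T}$-refinement if there is a group automorphism $\gamma$ of $\mathscr{D}$ with $\{\hat q\circ\gamma\}=\{-\hat q\}$. *)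

(* Defs.v *)
From mathcomp Require Import all_boot all_algebra.
From mathcomp Require Import complex.
From mathcomp Require Import reals trigo.

Set Implicit Arguments.
Unset Strict Implicit.
Unset Printing Implicit Defensive.

Import GRing.Theory Num.Theory.
Local Open Scope ring_scope.

(* Q/Z is represented by rationals taken modulo the integers:            *)
Definition eqQZ (a b : rat) : Prop := (a - b) \is a Num.int.

Section FiniteBilinearForms.
Variable D : finZmodType.

Definition group_aut (f : D -> D) : Prop :=
  bijective f /\ (forall x y, f (x + y) = f x + f y).

Definition finite_bilinear_form (b : D -> D -> rat) : Prop :=
  [/\ (forall x y, eqQZ (b x y) (b y x)),
      (forall x y z, eqQZ (b (x + y) z) (b x z + b y z)),
      (forall x y z, eqQZ (b x (y + z)) (b x y + b x z)) &
      (forall x, (forall y, eqQZ (b x y) 0) -> x = 0)].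

Definition iso_to_neg (b : D -> D -> rat) : Prop :=
  exists f : D -> D, group_aut f /\ forall x y, eqQZ (b (f x) (f y)) (- b x y).

Definition quad_refinement (b : D -> D -> rat) (q : D -> rat) : Prop :=
  forall x y, eqQZ (q (x + y) - q x - q y + q 0) (b x y).

Definition qr_equiv (q q' : D -> rat) : Prop :=
  exists delta : D, forall x, eqQZ (q x) (q' (x + delta)).

Definition T_refinement (b : D -> D -> rat) (q : D -> rat) : Prop :=
  quad_refinement b q /\
  exists gamma : D -> D, group_aut gamma /\
    qr_equiv (fun x => q (gamma x)) (fun x => - q x).

Definition e2pi (R : realType) (r : rat) : R[i] :=
  ((cos (2 * pi * ratr r)) +i* (sin (2 * pi * ratr r)))%C.

Definition tau1 (R : realType) (q : D -> rat) : R[i] :=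
  \sum_(x : D) e2pi R (q x).

End FiniteBilinearForms.

(* Main.v *)
Require Import Defs.
From mathcomp Require Import all_boot all_order all_algebra all_fingroup.
From mathcomp Require Import complex.
From mathcomp Require Import reals trigo.
From mathcomp Require Import ring lra.
Import Order.TTheory GRing.Theory Num.Theory FinRing.Theory.
Local Open Scope ring_scope.

Section QZ.
Implicit Types a b c d : rat.
Lemma qz_refl a : eqQZ a a.
Proof. by rewrite /eqQZ subrr rpred0. Qed.
Lemma qz_eq a b : a = b -> eqQZ a b.
Proof. by move=> ->; apply: qz_refl. Qed.
Lemma qz_sym a b : eqQZ a b -> eqQZ b a.
Proof. by rewrite /eqQZ -opprB rpredN. Qed.
Lemma qz_trans a b c : eqQZ a b -> eqQZ b c -> eqQZ a c.
Proof.
rewrite /eqQZ => h1 h2; have -> : a - c = (a - b) + (b - c) by ring.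
exact: rpredD.
Qed.
Lemma qz_nat (k : nat) a : a \is a Num.int -> k%:R * a \is a Num.int.
Proof. by move=> h; apply: rpredM => //; apply: natr_int. Qed.
Lemma zD a c : a \is a Num.int -> c \is a Num.int -> a + c \is a Num.int.
Proof. exact: rpredD. Qed.
Lemma zN a : a \is a Num.int -> - a \is a Num.int.
Proof. by rewrite rpredN. Qed.
End QZ.

Ltac zint := repeat (first [ assumption | apply: zD | apply: zN | apply: qz_nat ]).


Section E2pi.
Variable R : realType.
Local Notation e := (e2pi R).

Lemma e2piD r s : e (r + s) = e r * e s.
Proof.
rewrite /e2pi rmorphD mulrDr cosD sinD.
by apply/eqP; rewrite eq_complex /= eqxx /=; apply/eqP; ring.
Qed.

Lemma cs_nat (n : nat) : cos (2 * pi * n%:R) = 1 :> R /\ sin (2 * pi * n%:R) = 0 :> R.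
Proof.
have -> : 2 * pi * n%:R = 0 + (pi *+ 2) *+ n :> R.
  by rewrite add0r -mulrnA -[pi *+ _]mulr_natr natrM; ring.
by rewrite (periodicn (@cosD2pi R)) (periodicn (@sinD2pi R)) cos0 sin0.
Qed.

Lemma e2pi_intr (z : int) : e z%:~R = 1.
Proof.
rewrite /e2pi ratr_int; case: z => n.
  by rewrite -pmulrn (cs_nat n).1 (cs_nat n).2.
rewrite NegzE mulrNz -pmulrn mulrN cosN sinN (cs_nat n.+1).1 (cs_nat n.+1).2 oppr0.
by [].
Qed.

Lemma e2pi_int r : r \is a Num.int -> e r = 1.
Proof. by case/intrP=> z ->; apply: e2pi_intr. Qed.

Lemma e2pi_qz r s : eqQZ r s -> e r = e s.
Proof.
rewrite /eqQZ => h; have -> : r = s + (r - s) by ring.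
by rewrite e2piD (@e2pi_int _ h) mulr1.
Qed.

Lemma e2pi0 : e 0 = 1.
Proof. by rewrite e2pi_int // rpred0. Qed.

Lemma e2pi_half : e (2^-1) = -1.
Proof.
rewrite /e2pi fmorphV rmorph_nat.
have h2 : (2 : R) != 0 by rewrite pnatr_eq0.
have -> : 2 * pi * (2%:R)^-1 = pi :> R.
  by rewrite -mulrA mulrCA divff // mulr1.
by rewrite cospi sinpi; apply/eqP; rewrite eq_complex /= oppr0 !eqxx.
Qed.

Lemma e2piN r : e (- r) = ((e r)^*)%C.
Proof. by rewrite /e2pi rmorphN mulrN cosN sinN. Qed.

Lemma norm_e2pi r : `|e r| = 1.
Proof.
by rewrite normc_def /= cos2Dsin2 sqrtr1.
Qed.

Lemma cos_intz (x : R) (z : int) : cos (x + (pi *+ 2) *~ z) = cos x.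
Proof.
case: z => n; first by rewrite -pmulrn (periodicn (@cosD2pi R)).
rewrite NegzE mulrNz -pmulrn.
by rewrite -[in RHS](subrK ((pi *+ 2) *+ n.+1) x) (periodicn (@cosD2pi R)).
Qed.

Lemma cos2pi_eq1 (t : R) : cos (2 * pi * t) = 1 -> t \is a Num.int.
Proof.
move=> hc.
have /andP[h1 h2] := floor_itv t.
set z := Num.floor t in h1 h2.
set s := t - z%:~R.
have s0 : 0 <= s by rewrite subr_ge0.
have s1 : s < 1 by move: h2; rewrite /s intrD mulr1z; lra.
have hs : cos ((pi * s) *+ 2) = 1.
  rewrite -hc.
  have -> : 2 * pi * t = (pi * s) *+ 2 + (pi *+ 2) *~ z.
    rewrite /s -mulrzr -[(pi * _) *+ 2]mulr_natr -[pi *+ 2]mulr_natr; ring.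
  by rewrite cos_intz.
move: hs; rewrite cos_mulr2n => hs.
have hc2 : cos (pi * s) ^+ 2 = 1.
  by move: hs; rewrite -mulr_natr; lra.
have hsin : sin (pi * s) = 0.
  by apply/eqP; rewrite -sqrf_eq0 sin2cos2 hc2 subrr.
have : ~~ (0 < pi * s < pi).
  by apply/negP => /sin_gt0_pi; rewrite hsin ltxx.
rewrite negb_and -!leNgt => /orP[hle|hle].
  have hs0 : s = 0.
    apply/eqP; rewrite eq_le s0 andbT.
    by rewrite -(pmulr_rle0 _ (@pi_gt0 R)).
  have -> : t = z%:~R by move: hs0; rewrite /s => /eqP; rewrite subr_eq0 => /eqP.
  exact: intr_int.
exfalso; move: hle; rewrite -{1}(mulr1 pi) ler_pM2l ?(@pi_gt0 R) // => h.
by move: s1; rewrite ltNge h.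
Qed.

Lemma e2pi_eq1 r : e r = 1 -> r \is a Num.int.
Proof.
move/eqP; rewrite eq_complex /= => /andP[/eqP hc _].
have /intrP [z hz] := @cos2pi_eq1 _ hc.
apply/intrP; exists z; apply: (fmorph_inj (@ratr R)).
exact: (etrans hz (esym (ratr_int _ _))).
Qed.

End E2pi.

Section Forms.
Variables (R : realType) (D : finZmodType) (b : D -> D -> rat).
Hypothesis hb : finite_bilinear_form b.
Local Notation e := (e2pi R).
Local Notation tau := (@tau1 D R).
Implicit Types (q qq l : D -> rat).

Lemma bsym x y : eqQZ (b x y) (b y x). Proof. by case: hb. Qed.
Lemma bDl x y z : eqQZ (b (x + y) z) (b x z + b y z). Proof. by case: hb. Qed.
Lemma bDr x y z : eqQZ (b x (y + z)) (b x y + b x z). Proof. by case: hb. Qed.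
Lemma bnd x : (forall y, eqQZ (b x y) 0) -> x = 0. Proof. by case: hb => _ _ _; apply. Qed.

Lemma b0r x : eqQZ (b x 0) 0.
Proof.
have := bDr x 0 0; rewrite addr0 /eqQZ => h.
have -> : b x 0 - 0 = - (b x 0 - (b x 0 + b x 0)) by ring.
by rewrite rpredN.
Qed.

Lemma b0l x : eqQZ (b 0 x) 0.
Proof.
have := bDl 0 0 x; rewrite addr0 /eqQZ => h.
have -> : b 0 x - 0 = - (b 0 x - (b 0 x + b 0 x)) by ring.
by rewrite rpredN.
Qed.

Lemma bMnr x y k : eqQZ (b x (y *+ k)) (k%:R * b x y).
Proof.
elim: k => [|k IH]; first by rewrite mulr0n mul0r; apply: b0r.
have h := bDr x y (y *+ k); move: h IH; rewrite /eqQZ mulrS => h IH.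
have -> : b x (y + y *+ k) - k.+1%:R * b x y =
   (b x (y + y *+ k) - (b x y + b x (y *+ k))) + (b x (y *+ k) - k%:R * b x y).
  by rewrite -addn1 natrD; ring.
exact: rpredD.
Qed.

Lemma bMnl x y k : eqQZ (b (x *+ k) y) (k%:R * b x y).
Proof.
elim: k => [|k IH]; first by rewrite mulr0n mul0r; apply: b0l.
have h := bDl x (x *+ k) y; move: h IH; rewrite /eqQZ mulrS => h IH.
have -> : b (x + x *+ k) y - k.+1%:R * b x y =
   (b (x + x *+ k) y - (b x y + b (x *+ k) y)) + (b (x *+ k) y - k%:R * b x y).
  by rewrite -addn1 natrD; ring.
exact: rpredD.
Qed.

Definition additive_qz (l : D -> rat) := forall x y, eqQZ (l (x + y)) (l x + l y).

Lemma char_sum l : additive_qz l ->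
  \sum_x e (l x) = if [forall x, l x \is a Num.int] then #|D|%:R else 0.
Proof.
move=> hl; case: ifP => [/forallP h|/negbT/forallPn [x0 hx0]].
  under eq_bigr => x _ do rewrite (@e2pi_int R _ (h x)).
  by rewrite sumr_const.
set S := \sum_x e (l x).
have hS : S = e (l x0) * S.
  rewrite {1}/S (reindex_inj (addIr x0)) /= /S mulr_sumr; apply: eq_bigr => x _.
  rewrite -e2piD; apply: e2pi_qz.
  by apply: qz_trans (hl x x0) _; rewrite addrC; apply: qz_refl.
have : (1 - e (l x0)) * S = 0 by rewrite mulrBl mul1r -hS subrr.
move/eqP; rewrite mulf_eq0 => /orP [|/eqP //].
rewrite subr_eq0 => /eqP/esym/e2pi_eq1 hh.
by rewrite hh in hx0.
Qed.



Lemma sum_b z : \sum_y e (b z y) = if z == 0 then #|D|%:R else 0.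
Proof.
rewrite char_sum; last by move=> x y; apply: bDr.
case: eqP => [->|nz].
  by case: forallP => // [[]] y; have := b0l y; rewrite /eqQZ subr0.
case: forallP => // h; exfalso; apply: nz; apply: bnd => y.
by rewrite /eqQZ subr0.
Qed.

Lemma sum_bN z : \sum_y e (- b z y) = if z == 0 then #|D|%:R else 0.
Proof.
rewrite char_sum; last first.
  move=> x y; have := bDr z x y; rewrite /eqQZ => h.
  have -> : - b z (x + y) - (- b z x + - b z y) = - (b z (x + y) - (b z x + b z y)) by ring.
  by rewrite rpredN.
case: eqP => [->|nz].
  by case: forallP => // [[]] y; have := b0l y; rewrite /eqQZ subr0 rpredN.
case: forallP => // h; exfalso; apply: nz; apply: bnd => y.
by rewrite /eqQZ subr0 -rpredN.
Qed.

Lemma tau_qz q qq : (forall x, eqQZ (q x) (qq x)) -> tau q = tau qq.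
Proof. by move=> h; apply: eq_bigr => x _; apply: e2pi_qz. Qed.

Lemma tau_shift q a c : tau (fun x => q (x + a) + c) = e c * tau q.
Proof.
rewrite /tau1 [in RHS](reindex_inj (addIr a)) /= mulr_sumr.
by apply: eq_bigr => x _; rewrite e2piD mulrC.
Qed.

Lemma tau_comp q g : bijective g -> tau (fun x => q (g x)) = tau q.
Proof.
move=> /bij_inj gi.
by rewrite /tau1 [in RHS](reindex_inj gi).
Qed.

Lemma tau_opp q : tau (fun x => - q x) = ((tau q)^*)%C.
Proof.
rewrite /tau1 raddf_sum; apply: eq_bigr => x _; exact: e2piN.
Qed.

Lemma cardD_gt0 : (0 < #|D|)%N.
Proof. by apply/card_gt0P; exists 0. Qed.

Lemma cardD_neq0 : (#|D|%:R : R[i]) != 0.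
Proof. by rewrite pnatr_eq0 -lt0n cardD_gt0. Qed.

Lemma tau_norm q : quad_refinement b q -> tau q * tau (fun x => - q x) = #|D|%:R.
Proof.
move=> hq.
rewrite /tau1 mulr_sumr.
under eq_bigr => y _ do rewrite mulr_suml (reindex_inj (addIr y)) /=.
have E : forall y z, e (q (z + y)) * e (- q y) = e (q z - q 0) * e (b z y).
  move=> y z; rewrite -!e2piD; apply: e2pi_qz.
  have := hq z y; rewrite /eqQZ => h.
  have -> : q (z + y) + - q y - (q z - q 0 + b z y) =
     q (z + y) - q z - q y + q 0 - b z y by ring.
  exact: h.
under eq_bigr => y _ do under eq_bigr => z _ do rewrite E.
rewrite exchange_big /=.
under eq_bigr => z _ do rewrite -mulr_sumr sum_b.
rewrite (bigD1 0) //= eqxx big1 ?addr0; last first.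
  by move=> z /negbTE ->; rewrite mulr0.
by rewrite subrr e2pi0 mul1r.
Qed.

Lemma tau_neq0 q : quad_refinement b q -> tau q != 0.
Proof.
move=> hq; apply/eqP => h0; have := @tau_norm q hq; rewrite h0 mul0r => /esym/eqP.
by rewrite (negbTE cardD_neq0).
Qed.

Lemma char_class l : additive_qz l -> exists a, forall x, eqQZ (l x) (b x a).
Proof.
move=> hl.
case: (boolP [exists a, [forall x, (l x - b x a) \is a Num.int]]).
  by case/existsP => a /forallP h; exists a.
move/existsPn => hn; exfalso.
have l0 : l 0 \is a Num.int.
  have := hl 0 0; rewrite addr0 /eqQZ => h.
  have -> : l 0 = - (l 0 - (l 0 + l 0)) by ring.
  by rewrite rpredN.
have S0 : \sum_a \sum_x e (l x - b x a) = 0.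
  apply: big1 => a _; rewrite char_sum.
    by rewrite (negbTE (hn a)).
  move=> x y; have := hl x y; have := bDl x y a; rewrite /eqQZ => h1 h2.
  have -> : l (x + y) - b (x + y) a - (l x - b x a + (l y - b y a)) =
    (l (x + y) - (l x + l y)) - (b (x + y) a - (b x a + b y a)) by ring.
  exact: rpredB.
move: S0; rewrite exchange_big /=.
under eq_bigr => x _ do under eq_bigr => a _ do rewrite e2piD.
under eq_bigr => x _ do rewrite -mulr_sumr sum_bN.
rewrite (bigD1 0) //= eqxx big1 ?addr0; last first.
  by move=> z /negbTE ->; rewrite mulr0.
rewrite (@e2pi_int R _ l0) mul1r => /eqP.
by rewrite (negbTE cardD_neq0).
Qed.

Lemma ref_class (q1 q2 : D -> rat) : quad_refinement b q1 -> quad_refinement b q2 ->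
  exists a c, forall x, eqQZ (q1 x) (q2 (x + a) + c).
Proof.
move=> h1 h2.
pose l x := q1 x - q1 0 - (q2 x - q2 0).
have hl : additive_qz l.
  move=> x y; have := h1 x y; have := h2 x y; rewrite /eqQZ /l => g2 g1.
  have -> : q1 (x + y) - q1 0 - (q2 (x + y) - q2 0) -
     (q1 x - q1 0 - (q2 x - q2 0) + (q1 y - q1 0 - (q2 y - q2 0))) =
     (q1 (x + y) - q1 x - q1 y + q1 0 - b x y) -
     (q2 (x + y) - q2 x - q2 y + q2 0 - b x y) by ring.
  exact: rpredB.
have [a ha] := @char_class l hl.
exists a, (q1 0 - q2 a) => x.
have := ha x; have := h2 x a; rewrite /eqQZ /l => g2 g1.
have -> : q1 x - (q2 (x + a) + (q1 0 - q2 a)) =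
  (q1 x - q1 0 - (q2 x - q2 0) - b x a) -
  (q2 (x + a) - q2 x - q2 a + q2 0 - b x a) by ring.
exact: rpredB.
Qed.



Lemma memD (H : {group D}) x y : x \in H -> y \in H -> x + y \in H.
Proof. exact: groupM. Qed.
Lemma memN (H : {group D}) x : x \in H -> - x \in H.
Proof. by rewrite -zmodVgE groupV. Qed.
Lemma memMn (H : {group D}) x k : x \in H -> x *+ k \in H.
Proof. by move=> hx; rewrite -zmodXgE; apply: groupX. Qed.
Lemma mem0 (H : {group D}) : (0 : D) \in H.
Proof. exact: group1. Qed.

Definition refH (H : {set D}) q :=
  forall x y, x \in H -> y \in H -> eqQZ (q (x + y) - q x - q y + q 0) (b x y).

Lemma ext_ref (H : {group D}) (g : D) q : refH H q ->
  exists q', refH (H <*> <[g]>)%g q'.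
Proof.
move=> hq.
have hex : exists d, (0 < d)%N && (g *+ d \in H).
  exists #[g]%g; rewrite order_gt0 /= -zmodXgE expg_order; exact: group1.
pose m := ex_minn hex.
have [hm0 hmH] : (0 < m)%N /\ g *+ m \in H.
  by rewrite /m; case: ex_minnP => d /andP[].
have mmin : forall d, (0 < d)%N -> g *+ d \in H -> (m <= d)%N.
  move=> d d0 dH; rewrite /m; case: ex_minnP => d' _ hmin; apply: hmin.
  by rewrite d0 dH.
pose beta := b g g. pose q0 := q 0.
pose v := (q (g *+ m) - q0 - beta * (m%:R * (m%:R - 1) / 2)) / m%:R.
pose Phi (k : nat) := v * k%:R + beta * (k%:R * (k%:R - 1) / 2).
pose G (h : D) (k : nat) := q h + k%:R * b h g + Phi k.
have mnz : (m%:R : rat) != 0 by rewrite pnatr_eq0 -lt0n.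
have Phim : q (g *+ m) = q0 + Phi m.
  by rewrite /Phi /v; field.
have step : forall a c, g *+ a \in H -> g *+ c \in H ->
    eqQZ (q (g *+ a)) (q0 + Phi a) -> eqQZ (q (g *+ c)) (q0 + Phi c) ->
    eqQZ (q (g *+ (a + c))) (q0 + Phi (a + c)).
  move=> a c ha hc ea ec.
  have h := hq _ _ ha hc; rewrite -mulrnDr in h.
  have h2 := bMnl g (g *+ c) a; have h3 := bMnr g g c.
  move: h ea ec h2 h3; rewrite /eqQZ => h ea ec h2 h3.
  have -> : q (g *+ (a + c)) - (q0 + Phi (a + c)) =
     (q (g *+ (a + c)) - q (g *+ a) - q (g *+ c) + q 0 - b (g *+ a) (g *+ c))
     + (q (g *+ a) - (q0 + Phi a)) + (q (g *+ c) - (q0 + Phi c))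
     + (b (g *+ a) (g *+ c) - a%:R * b g (g *+ c))
     + a%:R * (b g (g *+ c) - c%:R * b g g).
    by rewrite /Phi /q0 /beta natrD; field.
  by zint.
have psim : forall j, eqQZ (q (g *+ (j * m))) (q0 + Phi (j * m)).
  elim=> [|j IH].
    by apply: qz_eq; rewrite mul0n mulr0n /Phi /q0 /=; field.
  rewrite mulSn; apply: step => //.
  - by rewrite mulnC mulrnA memMn.
  - by apply: qz_eq.
have psi : forall d, g *+ d \in H -> eqQZ (q (g *+ d)) (q0 + Phi d).
  move=> d hd.
  have hr : g *+ (d %% m) \in H.
    have -> : g *+ (d %% m) = g *+ d - g *+ (d %/ m * m).
      by rewrite {2}(divn_eq d m) mulrnDr addrC addKr.
    by rewrite memD // memN // mulnC mulrnA memMn.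
  have r0 : (d %% m = 0)%N.
    case: (posnP (d %% m)) => // rp.
    by have := mmin _ rp hr; rewrite leqNgt ltn_pmod.
  by rewrite (divn_eq d m) r0 addn0; apply: psim.
have WD : forall h h' k k', h \in H -> h' \in H ->
    h + g *+ k = h' + g *+ k' -> eqQZ (G h k) (G h' k').
  move=> h h' k k'.
  wlog le : h h' k k' / (k' <= k)%N.
    move=> W hh hh' E; case: (leqP k' k) => [le|/ltnW le]; first exact: W.
    by apply: qz_sym; apply: W.
  move=> hh hh' E.
  have [d kd] : exists d, k = (k' + d)%N by exists (k - k')%N; rewrite subnKC.
  subst k.
  have h'E : h' = h + g *+ d.
    apply: (addIr (g *+ k')); rewrite -E mulrnDr.
    by rewrite [g *+ k' + _]addrC addrA.
  have gdH : g *+ d \in H.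
    have -> : g *+ d = - h + h' by rewrite h'E addKr.
    by rewrite memD // memN.
  have f1 := hq _ _ hh gdH.
  have f2 := psi _ gdH.
  have f3 := bMnr h g d.
  have f4 := bDl h (g *+ d) g.
  have f5 := bMnl g g d.
  move: f1 f2 f3 f4 f5; rewrite /eqQZ => f1 f2 f3 f4 f5.
  subst h'.
  have -> : G h (k' + d)%N - G (h + g *+ d) k' =
    - (q (h + g *+ d) - q h - q (g *+ d) + q 0 - b h (g *+ d))
    - (q (g *+ d) - (q0 + Phi d))
    - (b h (g *+ d) - d%:R * b h g)
    - k'%:R * ((b (h + g *+ d) g - (b h g + b (g *+ d) g)) + (b (g *+ d) g - d%:R * b g g)).
    by rewrite /G /Phi /q0 /beta natrD; field.
  by zint.
have comm : commute H <[g]>%g.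
  by apply: centC; apply/centsP => x _ y _; apply: zmod_mulgC.
have joinE := comm_joingE comm.
pose P x (hk : D * 'I_#[g]%g) := (hk.1 \in H) && (x == hk.1 + g *+ hk.2).
have rep : forall x, x \in (H <*> <[g]>)%g -> exists hk, P x hk.
  move=> x; rewrite joinE => /mulsgP [h y hh /cycleP [i ->] ->].
  exists (h, Ordinal (ltn_pmod i (order_gt0 g))); rewrite /P /= hh /=.
  by rewrite zmodMgE -[g *+ _]zmodXgE expg_mod_order.
pose q' x := if [pick hk | P x hk] is Some hk then G hk.1 hk.2 else 0.
have q'spec : forall x, x \in (H <*> <[g]>)%g ->
    exists h k, [/\ h \in H, x = h + g *+ k & q' x = G h k].
  move=> x hx; rewrite /q'; case: pickP => [[h k] /andP [/= hh /eqP ->] | none].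
    by exists h, k.
  by exfalso; have [hk hhk] := rep x hx; rewrite none in hhk.
exists q' => x y hx hy.
have [h3 [k3 [hh3 E3 e3]]] := q'spec (x + y) (groupM hx hy).
have [h0 [k0 [hh0 E0 e0]]] := q'spec 0 (mem0 _).
have [h1 [k1 [hh1 E1 e1]]] := q'spec x hx.
have [h2 [k2 [hh2 E2 e2]]] := q'spec y hy.
rewrite e3 e0 e1 e2.
have w3 : eqQZ (G h3 k3) (G (h1 + h2) (k1 + k2)).
  apply: WD => //; first exact: memD.
  by rewrite -E3 E1 E2 mulrnDr addrACA.
have w0 : eqQZ (G h0 k0) (G 0 0).
  by apply: WD => //; [exact: mem0 | rewrite -E0 mulr0n addr0].
rewrite E1 E2.
have A := hq _ _ hh1 hh2.
have B1 := bDl h1 h2 g.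
have C1 := bDl h1 (g *+ k1) (h2 + g *+ k2).
have C2 := bDr h1 h2 (g *+ k2).
have C3 := bDr (g *+ k1) h2 (g *+ k2).
have C4 := bMnr h1 g k2.
have C5 := bMnl g h2 k1.
have C6 := bsym g h2.
have C7 := bMnl g (g *+ k2) k1.
have C8 := bMnr g g k2.
move: w3 w0 A B1 C1 C2 C3 C4 C5 C6 C7 C8; rewrite /eqQZ.
move=> w3 w0 A B1 C1 C2 C3 C4 C5 C6 C7 C8.
have -> : G h3 k3 - G h1 k1 - G h2 k2 + G h0 k0 - b (h1 + g *+ k1) (h2 + g *+ k2) =
   (G h3 k3 - G (h1 + h2) (k1 + k2)) + (G h0 k0 - G 0 0)
   + (q (h1 + h2) - q h1 - q h2 + q 0 - b h1 h2)
   + (k1 + k2)%:R * (b (h1 + h2) g - (b h1 g + b h2 g))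
   - (b (h1 + g *+ k1) (h2 + g *+ k2) - (b h1 (h2 + g *+ k2) + b (g *+ k1) (h2 + g *+ k2)))
   - (b h1 (h2 + g *+ k2) - (b h1 h2 + b h1 (g *+ k2)))
   - (b (g *+ k1) (h2 + g *+ k2) - (b (g *+ k1) h2 + b (g *+ k1) (g *+ k2)))
   - (b h1 (g *+ k2) - k2%:R * b h1 g)
   - (b (g *+ k1) h2 - k1%:R * b g h2)
   - (b (g *+ k1) (g *+ k2) - k1%:R * b g (g *+ k2))
   - k1%:R * ((b g h2 - b h2 g) + (b g (g *+ k2) - k2%:R * b g g)).
  by rewrite /G /Phi /beta natrD mulr0n !mul0r mulr0 !addr0; field.
by zint.
Qed.

Lemma ref_exists : exists q, quad_refinement b q.
Proof.
have claim : forall k, (k <= #|D|)%N -> exists (H : {group D}) q, refH H q /\ (k <= #|H|)%N.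
  elim=> [_|k IH hk].
    exists 1%G, (fun _ => 0) => //; split=> // x y /set1P -> /set1P ->.
    change (eqQZ (0 - 0 - 0 + 0) (b 0 0)).
    by apply: (qz_trans _ _ _ _ (qz_sym _ _ (b0l 0))); apply: qz_eq; rewrite !subr0.
  have [H [q [hq hkH]]] := IH (ltnW hk).
  case: (leqP k.+1 #|H|) => [hle|hlt]; first by exists H, q.
  case: (pickP [pred g | g \notin H]) => [g /= hg | none].
    have [q' hq'] := ext_ref _ g _ hq.
    exists (H <*> <[g]>)%G, q'; split => //.
    have hp : H \proper (H <*> <[g]>)%g.
      rewrite properE joing_subl /=; apply/subsetPn; exists g => //.
      by apply: (subsetP (joing_subr _ _)); apply: cycle_id.
    by have := proper_card hp; apply: leq_trans.
  exfalso.
  have : (#|[set: D]| <= #|H|)%N.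
    by apply: subset_leq_card; apply/subsetP=> x _; have := none x; rewrite /= => /negbFE.
  by rewrite cardsT => /(leq_trans hk); rewrite ltnNge -ltnS hlt.
have [H [q [hq hcard]]] := claim _ (leqnn _).
exists q => x y; apply: hq.
- have : (H : {set D}) == [set: D] by rewrite eqEcard subsetT cardsT.
  by move/eqP ->; rewrite inE.
- have : (H : {set D}) == [set: D] by rewrite eqEcard subsetT cardsT.
  by move/eqP ->; rewrite inE.
Qed.

End Forms.

Section Main.
Variables (R : realType) (D : finZmodType) (b : D -> D -> rat).
Hypothesis hb : finite_bilinear_form b.
Local Notation tau := (@tau1 D R).
Local Notation ph q := (tau q / `|tau q|).
Implicit Types (q qq : D -> rat).

Lemma T_real q : T_refinement b q -> (tau q)^*%C = tau q.
Proof.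
case=> hq [g [[gbij _] [d hd]]].
rewrite -tau_opp -(tau_comp R D q g gbij) (tau_qz R D _ _ hd).
rewrite -[LHS]mul1r -(e2pi0 R) -(tau_shift R D _ d 0); apply: tau_qz => x /=.
by apply: qz_eq; rewrite addr0.
Qed.

Lemma phase_pm q : (tau q)^*%C = tau q -> tau q != 0 -> ph q = 1 \/ ph q = -1.
Proof.
move: (tau q) => t; case: t => a c /= hc hnz.
have c0 : c = 0 by case: hc => hc; lra.
subst c.
have -> : `|(a +i* 0)%C| = (`|a|)%:C%C.
  by rewrite normc_def /= expr0n /= addr0 sqrtr_sqr.
have anz : a != 0 by apply: contraNneq hnz => ->.
have aCnz : (a%:C)%C != 0 by rewrite (inj_eq (@complexI R)).
case: (ltrgtP a 0) => [an|ap|]; last by move/eqP; rewrite (negbTE anz).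
  right; rewrite ltr0_norm // rmorphN invrN mulrN.
  by rewrite -[(a +i* 0)%C]/((a%:C)%C) divff.
left; rewrite gtr0_norm //.
by rewrite -[(a +i* 0)%C]/((a%:C)%C) divff.
Qed.

Lemma tau_half q : tau (fun x => q x + 2^-1) = - tau q.
Proof.
rewrite /tau1 -sumrN; apply: eq_bigr => x _.
by rewrite e2piD e2pi_half mulrN1.
Qed.

Lemma T_half q : T_refinement b q -> T_refinement b (fun x => q x + 2^-1).
Proof.
case=> hq [g [hg [d hd]]]; split.
  move=> x y; have := hq x y; rewrite /eqQZ => h.
  have -> : (q (x + y) + 2^-1) - (q x + 2^-1) - (q y + 2^-1) + (q 0 + 2^-1) - b x y
     = q (x + y) - q x - q y + q 0 - b x y by ring.
  exact: h.
exists g; split => //; exists d => x; have := hd x; rewrite /eqQZ => h.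
have -> : q (g x) + 2^-1 - - (q (x + d) + 2^-1) = (q (g x) - - q (x + d)) + 1 by field.
by rewrite rpredD // rpred1.
Qed.

Lemma ph_neg q : ph (fun x => q x + 2^-1) = - ph q.
Proof. by rewrite tau_half normrN mulNr. Qed.

Lemma uniq_part q qq : quad_refinement b q -> quad_refinement b qq ->
  ph qq = ph q -> qr_equiv qq q.
Proof.
move=> hq hqq hph.
have [a [c hac]] := ref_class R D b hb qq q hqq hq.
have Et : tau qq = e2pi R c * tau q by rewrite -(tau_shift R D q a c); apply: tau_qz.
have nz := tau_neq0 R D b hb q hq.
have phnz : ph q != 0 by rewrite mulf_neq0 // invr_neq0 // normr_eq0.
move: hph; rewrite Et normrM norm_e2pi mul1r -mulrA => hph.
have : (e2pi R c - 1) * ph q = 0 by rewrite mulrBl mul1r hph subrr.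
move/eqP; rewrite mulf_eq0 (negbTE phnz) orbF subr_eq0 => /eqP/e2pi_eq1 ci.
exists a => x; have := hac x; rewrite /eqQZ => h.
have -> : qq x - q (x + a) = (qq x - (q (x + a) + c)) + c by ring.
exact: rpredD.
Qed.

End Main.

Theorem proposition7 (R : realType) (D : finZmodType) (b : D -> D -> rat)
    (sigma : nat) :
  finite_bilinear_form b ->
  iso_to_neg b ->
  (sigma = 0%N \/ sigma = 4%N) ->
  exists q : D -> rat,
    [/\ T_refinement b q,
        tau1 R q / `|tau1 R q| = e2pi R (sigma%:R / 8%:R) &
        forall q' : D -> rat,
          T_refinement b q' ->
          tau1 R q' / `|tau1 R q'| = e2pi R (sigma%:R / 8%:R) ->
          qr_equiv q' q].
Proof.
move=> hb hiso hsig.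
set w := e2pi R (sigma%:R / 8%:R).
have hw : w = 1 \/ w = -1.
  rewrite /w; case: hsig => ->; [left | right].
    by rewrite mulr0n mul0r e2pi0.
  have -> : (4%:R / 8%:R : rat) = 2^-1 by field.
  exact: e2pi_half.
have [q0 hq0] := ref_exists D b hb.
case: hiso => f [[fbij fadd] hf].
have f0 : f 0 = 0 by apply: (addrI (f 0)); rewrite -fadd !addr0.
have hq1' : quad_refinement b (fun x => - q0 (f x)).
  move=> x y /=; rewrite fadd f0.
  have := hq0 (f x) (f y); have := hf x y; rewrite /eqQZ => h1 h2.
  have -> : - q0 (f x + f y) - - q0 (f x) - - q0 (f y) + - q0 0 - b x y =
     - (q0 (f x + f y) - q0 (f x) - q0 (f y) + q0 0 - b (f x) (f y))
     - (b (f x) (f y) - - b x y) by ring.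
  by zint.
have [a [c hac]] := ref_class R D b hb _ _ hq1' hq0.
pose q1 x := q0 x + c / 2.
have T1 : T_refinement b q1.
  split.
    move=> x y; have := hq0 x y; rewrite /eqQZ /q1 => h.
    have -> : q0 (x + y) + c / 2 - (q0 x + c / 2) - (q0 y + c / 2) + (q0 0 + c / 2) - b x y
       = q0 (x + y) - q0 x - q0 y + q0 0 - b x y by ring.
    exact: h.
  exists f; split; first by split.
  exists a => x; have := hac x; rewrite /eqQZ /q1 => h.
  have -> : q0 (f x) + c / 2 - - (q0 (x + a) + c / 2) =
     - (- q0 (f x) - (q0 (x + a) + c)) by field.
  by rewrite rpredN.
have nz1 := tau_neq0 R D b hb q1 T1.1.
have p1 := phase_pm R D q1 (T_real R D b q1 T1) nz1.
have [qq [Tq phq]] : exists qq, T_refinement b qq /\ tau1 R qq / `|tau1 R qq| = w.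
  case: hw => ->; case: p1 => p1.
  - by exists q1.
  - exists (fun x => q1 x + 2^-1); split; first exact: T_half.
    by rewrite ph_neg p1 opprK.
  - exists (fun x => q1 x + 2^-1); split; first exact: T_half.
    by rewrite ph_neg p1.
  - by exists q1.
exists qq; split => // q' Tq' phq'.
by apply: (uniq_part R D b hb qq q' Tq.1 Tq'.1); rewrite phq' phq.
Qed.
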